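(* Let $A,J\in\mathbb{R}^{n\times n}$ and $0<T_{\min}\le T_{\max}$. Assume there exists a symmetric positive definite matrix $P\in\mathbb{R}^{n\times n}$ such that $$J^Te^{A^T\theta}Pe^{A\theta}J-P\prec 0\quad\text{for all }\theta\in[T_{\min},T_{\max}].$$ Then for any impulse sequence in $\mathbb{I}_{[T_{\min},T_{\max}]}$, the impulsive system (S) is globally asymptotically stable.
   Context: The impulsive system (S) is: $\dot x(t)=Ax(t)$ for $t\neq t_k$; $x^+(t)=Jx(t)$ for $t=t_k$, $k\in\{1,2,\dots\}$; $x(t_0)=x_0\in\mathbb{R}^n$. The state $x(t)$ is left-continuous and $x^+(t):=\lim_{s\downarrow t}x(s)$. The impulse times $\{t_1,t_2,\dots\}$ form a strictly increasing sequence in $(t_0,\infty)$, either finite, or infinite and unbounded, with $T_k:=t_{k+1}-t_k>\epsilon$ for some $\epsilon>0$. For a set $\mathcal{S}\subseteq(0,\infty)$, $\mathbb{I}_{\mathcal{S}}$ denotes the set of impulse sequences $\{t_1,t_2,\dots\}$ with $t_{k+1}-t_k\in\mathcal{S}$ for all $k$. For symmetric matrices, $M\prec 0$ ($M\succ0$) means negative (positive) definite. *)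

(* Defs.v *)
(* classical reals. Vectors in R^n are functions nat -> R
   (only indices < n are meaningful); n x n matrices are nat -> nat -> R. *)
From Stdlib Require Import Reals Lra Lia ClassicalEpsilon Factorial.
Open Scope R_scope.

Fixpoint vsum (n : nat) (f : nat -> R) : R :=
  match n with O => 0 | S m => vsum m f + f m end.

Definition vec := nat -> R.
Definition mat := nat -> nat -> R.

Definition mmul (n : nat) (A B : mat) : mat :=
  fun i j => vsum n (fun k => A i k * B k j).
Definition mtr (A : mat) : mat := fun i j => A j i.
Definition msub (A B : mat) : mat := fun i j => A i j - B i j.
Definition mid : mat := fun i j => if Nat.eqb i j then 1 else 0.
Fixpoint mpow (n : nat) (A : mat) (k : nat) : mat :=
  match k with O => mid | S k' => mmul n A (mpow n A k') end.
Definition mvec (n : nat) (A : mat) (v : vec) : vec :=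
  fun i => vsum n (fun k => A i k * v k).

Definition quad (n : nat) (M : mat) (v : vec) : R :=
  vsum n (fun i => v i * mvec n M v i).
Definition nonzero_vec (n : nat) (v : vec) : Prop := exists i, (i < n)%nat /\ v i <> 0.
Definition symmetric (n : nat) (M : mat) : Prop :=
  forall i j, (i < n)%nat -> (j < n)%nat -> M i j = M j i.
Definition pos_def (n : nat) (M : mat) : Prop :=
  forall v, nonzero_vec n v -> 0 < quad n M v.
Definition neg_def (n : nat) (M : mat) : Prop :=
  forall v, nonzero_vec n v -> quad n M v < 0.

Definition expm (n : nat) (A : mat) (t : R) : mat :=
  fun i j => epsilon (inhabits 0)
    (fun l => Un_cv (fun N => sum_f_R0 (fun k => t ^ k / INR (Factorial.fact k) * mpow n A k i j) N) l).

Definition vnorm (n : nat) (v : vec) : R := sqrt (vsum n (fun i => v i ^ 2)).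

Definition right_lim (f : R -> R) (t L : R) : Prop :=
  forall eps, 0 < eps -> exists delta, 0 < delta /\
    forall s, t < s < t + delta -> Rabs (f s - L) < eps.
Definition left_lim (f : R -> R) (t L : R) : Prop :=
  forall eps, 0 < eps -> exists delta, 0 < delta /\
    forall s, t - delta < s < t -> Rabs (f s - L) < eps.

(* impulse sequences: tseq k is t_{k+1} (first impulse is tseq 0);
   membership in I_[Tmin,Tmax] with initial time t0 *)
Definition impulse_seq_in (t0 Tmin Tmax : R) (tseq : nat -> R) : Prop :=
  t0 < tseq 0%nat /\
  forall k, Tmin <= tseq (S k) - tseq k <= Tmax.

Definition is_impulse_time (tseq : nat -> R) (s : R) : Prop := exists k, tseq k = s.

Definition is_solution (n : nat) (A J : mat) (t0 : R) (tseq : nat -> R)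
    (x0 : vec) (x : R -> vec) : Prop :=
  (forall i, (i < n)%nat -> x t0 i = x0 i) /\
  (forall i, (i < n)%nat -> right_lim (fun s => x s i) t0 (x0 i)) /\
  (forall s, t0 < s -> ~ is_impulse_time tseq s ->
     forall i, (i < n)%nat -> derivable_pt_lim (fun r => x r i) s (mvec n A (x s) i)) /\
  (forall s, t0 < s -> forall i, (i < n)%nat -> left_lim (fun r => x r i) s (x s i)) /\
  (forall k i, (i < n)%nat ->
     right_lim (fun r => x r i) (tseq k) (mvec n J (x (tseq k)) i)).

Definition GAS (n : nat) (A J : mat) (t0 : R) (tseq : nat -> R) : Prop :=
  (forall eps, 0 < eps -> exists delta, 0 < delta /\
     forall x0 x, is_solution n A J t0 tseq x0 x -> vnorm n x0 < delta ->
       forall s, t0 <= s -> vnorm n (x s) < eps) /\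
  (forall x0 x, is_solution n A J t0 tseq x0 x ->
     forall eps, 0 < eps -> exists T, forall s, T <= s -> vnorm n (x s) < eps).

(* Main.v *)
Require Import Defs.
From Stdlib Require Import Reals Lra Lia ClassicalEpsilon Classical FunctionalExtensionality Factorial.
From Coquelicot Require Import Coquelicot.
Open Scope R_scope.

Lemma vsum_ext n f g : (forall i, (i < n)%nat -> f i = g i) -> vsum n f = vsum n g.
Proof. induction n; simpl; intros H; auto. rewrite IHn by (intros; apply H; lia). rewrite H by lia; auto. Qed.

Lemma vsum_plus n f g : vsum n (fun i => f i + g i) = vsum n f + vsum n g.
Proof. induction n; simpl; [lra|]. rewrite IHn; lra. Qed.

Lemma vsum_minus n f g : vsum n (fun i => f i - g i) = vsum n f - vsum n g.
Proof. induction n; simpl; [lra|]. rewrite IHn; lra. Qed.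

Lemma vsum_scal n c f : vsum n (fun i => c * f i) = c * vsum n f.
Proof. induction n; simpl; [lra|]. rewrite IHn; lra. Qed.

Lemma vsum_scal_r n c f : vsum n (fun i => f i * c) = vsum n f * c.
Proof. induction n; simpl; [lra|]. rewrite IHn; lra. Qed.

Lemma vsum_zero n : vsum n (fun _ => 0) = 0.
Proof. induction n; simpl; [lra|]. rewrite IHn; lra. Qed.

Lemma vsum_swap n m (f : nat -> nat -> R) :
  vsum n (fun i => vsum m (fun j => f i j)) = vsum m (fun j => vsum n (fun i => f i j)).
Proof.
  induction n; simpl. { rewrite vsum_zero; auto. }
  rewrite IHn. rewrite <- vsum_plus. auto.
Qed.

Lemma vsum_le n f g : (forall i, (i < n)%nat -> f i <= g i) -> vsum n f <= vsum n g.
Proof. induction n; simpl; intros H; [lra|]. assert (H1 := H n ltac:(lia)).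
  assert (vsum n f <= vsum n g) by (apply IHn; intros; apply H; lia). lra. Qed.

Lemma vsum_nonneg n f : (forall i, (i < n)%nat -> 0 <= f i) -> 0 <= vsum n f.
Proof. intros H. rewrite <- (vsum_zero n). apply vsum_le; auto. Qed.

Lemma vsum_abs n f : Rabs (vsum n f) <= vsum n (fun i => Rabs (f i)).
Proof. induction n; simpl. { rewrite Rabs_R0; lra. }
  eapply Rle_trans; [apply Rabs_triang|]. lra. Qed.

Lemma vsum_term_le n f k : (forall i, (i < n)%nat -> 0 <= f i) -> (k < n)%nat -> f k <= vsum n f.
Proof. induction n; simpl; intros H Hk; [lia|].
  assert (0 <= vsum n f) by (apply vsum_nonneg; intros; apply H; lia).
  destruct (Nat.eq_dec k n). { subst. lra. }
  assert (f k <= vsum n f) by (apply IHn; [intros; apply H; lia | lia]).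
  assert (0 <= f n) by (apply H; lia). lra. Qed.

Lemma lim_plus {T} (F : (T -> Prop) -> Prop) {FF : Filter F} f g l m :
  filterlim f F (locally l) -> filterlim g F (locally m) ->
  filterlim (fun x => f x + g x) F (locally (l + m)).
Proof. intros H1 H2. apply (filterlim_comp_2 f g Rplus H1 H2).
  apply (@filterlim_plus R_AbsRing R_NormedModule). Qed.

Lemma lim_mult {T} (F : (T -> Prop) -> Prop) {FF : Filter F} f g l m :
  filterlim f F (locally l) -> filterlim g F (locally m) ->
  filterlim (fun x => f x * g x) F (locally (l * m)).
Proof. intros H1 H2. apply (filterlim_comp_2 f g Rmult H1 H2).
  apply (@filterlim_mult R_AbsRing). Qed.

Lemma lim_opp {T} (F : (T -> Prop) -> Prop) {FF : Filter F} f l :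
  filterlim f F (locally l) -> filterlim (fun x => - f x) F (locally (- l)).
Proof. intros H1.
  replace (fun x => - f x) with (fun x => (-1) * f x) by (apply functional_extensionality; intros; ring).
  replace (-l) with ((-1)*l) by ring. apply lim_mult; auto. apply filterlim_const. Qed.

Lemma lim_minus {T} (F : (T -> Prop) -> Prop) {FF : Filter F} f g l m :
  filterlim f F (locally l) -> filterlim g F (locally m) ->
  filterlim (fun x => f x - g x) F (locally (l - m)).
Proof. intros H1 H2. apply lim_plus; auto. apply lim_opp; auto. Qed.

Lemma lim_vsum {T} (F : (T -> Prop) -> Prop) {FF : Filter F} n (f : nat -> T -> R) l :
  (forall i, (i < n)%nat -> filterlim (f i) F (locally (l i))) ->
  filterlim (fun x => vsum n (fun i => f i x)) F (locally (vsum n l)).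
Proof. induction n; simpl; intros H. apply filterlim_const.
  apply (@lim_plus _ F FF). apply IHn; intros; apply H; lia. apply H; lia. Qed.

Lemma ball_R (x e y : R) : ball x e y <-> Rabs (y - x) < e.
Proof. unfold ball; simpl. unfold AbsRing_ball, abs, minus, plus, opp; simpl. tauto. Qed.

Lemma right_lim_iff f t L : right_lim f t L <-> filterlim f (at_right t) (locally L).
Proof. unfold right_lim. rewrite filterlim_locally. split.
  - intros H eps. destruct (H eps (cond_pos eps)) as [d [Hd Hs]].
    exists (mkposreal d Hd). intros y Hy Hty. apply ball_R. apply Hs.
    apply ball_R in Hy. simpl in Hy. apply Rabs_lt_between in Hy. unfold minus, plus, opp in Hy; simpl in Hy. lra.
  - intros H eps Heps. destruct (H (mkposreal eps Heps)) as [d Hd].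
    exists d. split. apply cond_pos. intros s Hs. apply ball_R. apply Hd. apply ball_R.
    apply Rabs_def1; lra. lra. Qed.

Lemma left_lim_iff f t L : left_lim f t L <-> filterlim f (at_left t) (locally L).
Proof. unfold left_lim. rewrite filterlim_locally. split.
  - intros H eps. destruct (H eps (cond_pos eps)) as [d [Hd Hs]].
    exists (mkposreal d Hd). intros y Hy Hty. apply ball_R. apply Hs.
    apply ball_R in Hy. simpl in Hy. apply Rabs_lt_between in Hy. unfold minus, plus, opp in Hy; simpl in Hy. lra.
  - intros H eps Heps. destruct (H (mkposreal eps Heps)) as [d Hd].
    exists d. split. apply cond_pos. intros s Hs. apply ball_R. apply Hd. apply ball_R.
    apply Rabs_def1; lra. lra. Qed.

Lemma cont_lim F {FF : Filter F} f x : continuity_pt f x -> filter_le F (locally x) ->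
  filterlim f F (locally (f x)).
Proof. intros Hc Hle. apply continuity_pt_filterlim in Hc.
  eapply filterlim_filter_le_1; eauto. Qed.

Definition ss n (v : vec) := vsum n (fun i => v i * v i).
Definition dot n (u v : vec) := vsum n (fun i => u i * v i).
Definition mnorm n (M : mat) := vsum n (fun i => vsum n (fun j => Rabs (M i j))).

Lemma ss_nonneg n v : 0 <= ss n v.
Proof. apply vsum_nonneg; intros; nra. Qed.

Lemma ss_term n v i : (i < n)%nat -> v i * v i <= ss n v.
Proof. intros. apply (vsum_term_le n (fun i => v i * v i)); auto; intros; nra. Qed.

Lemma prod_le_ss n v i j : (i < n)%nat -> (j < n)%nat -> Rabs (v i * v j) <= ss n v.
Proof. intros Hi Hj. assert (H1 := ss_term n v i Hi). assert (H2 := ss_term n v j Hj).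
  rewrite Rabs_mult.
  assert (Rabs (v i) * Rabs (v i) = v i * v i) by (rewrite <- Rabs_mult; apply Rabs_pos_eq; nra).
  assert (Rabs (v j) * Rabs (v j) = v j * v j) by (rewrite <- Rabs_mult; apply Rabs_pos_eq; nra).
  assert (0 <= Rabs (v i)) by apply Rabs_pos. assert (0 <= Rabs (v j)) by apply Rabs_pos.
  nra. Qed.

Lemma mnorm_nonneg n M : 0 <= mnorm n M.
Proof. apply vsum_nonneg; intros; apply vsum_nonneg; intros; apply Rabs_pos. Qed.

Lemma quad_expand n M v : quad n M v = vsum n (fun i => vsum n (fun k => M i k * (v i * v k))).
Proof. unfold quad, mvec. apply vsum_ext; intros i _. rewrite <- vsum_scal.
  apply vsum_ext; intros; ring. Qed.

Lemma quad_bound n M v : Rabs (quad n M v) <= mnorm n M * ss n v.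
Proof. rewrite quad_expand. eapply Rle_trans; [apply vsum_abs|].
  unfold mnorm. rewrite <- vsum_scal_r. apply vsum_le; intros i Hi.
  eapply Rle_trans; [apply vsum_abs|]. rewrite <- vsum_scal_r. apply vsum_le; intros k Hk.
  rewrite Rabs_mult. apply Rmult_le_compat_l. apply Rabs_pos. apply prod_le_ss; auto. Qed.

Lemma mvec_ext n M u v i : (forall k, (k < n)%nat -> u k = v k) -> mvec n M u i = mvec n M v i.
Proof. intros H. unfold mvec. apply vsum_ext; intros. rewrite H; auto. Qed.

Lemma quad_ext n M u v : (forall k, (k < n)%nat -> u k = v k) -> quad n M u = quad n M v.
Proof. intros H. unfold quad. apply vsum_ext; intros. rewrite H by auto.
  rewrite (mvec_ext n M u v); auto. Qed.

Lemma ss_ext n u v : (forall k, (k < n)%nat -> u k = v k) -> ss n u = ss n v.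
Proof. intros H. unfold ss. apply vsum_ext; intros. rewrite H; auto. Qed.

Lemma mvec_mmul n X Y v i : mvec n (mmul n X Y) v i = mvec n X (mvec n Y v) i.
Proof. unfold mvec, mmul.
  transitivity (vsum n (fun k => vsum n (fun j => X i j * (Y j k * v k)))).
  - apply vsum_ext; intros. rewrite <- vsum_scal_r. apply vsum_ext; intros; ring.
  - rewrite vsum_swap. apply vsum_ext; intros. rewrite <- vsum_scal. auto. Qed.

Lemma dot_mtr n B u w : dot n u (mvec n (mtr B) w) = dot n (mvec n B u) w.
Proof. unfold dot, mvec, mtr.
  transitivity (vsum n (fun i => vsum n (fun k => B k i * u i * w k))).
  - apply vsum_ext; intros. rewrite <- vsum_scal. apply vsum_ext; intros; ring.
  - rewrite vsum_swap. apply vsum_ext; intros. rewrite <- vsum_scal_r. auto. Qed.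

Lemma quad_dot n M v : quad n M v = dot n v (mvec n M v).
Proof. reflexivity. Qed.

Lemma dot_ext n u1 u2 w1 w2 : (forall k, (k < n)%nat -> u1 k = u2 k) ->
  (forall k, (k < n)%nat -> w1 k = w2 k) -> dot n u1 w1 = dot n u2 w2.
Proof. intros H1 H2. unfold dot. apply vsum_ext; intros. rewrite H1, H2; auto. Qed.

Lemma quad_msub n X Y v : quad n (msub X Y) v = quad n X v - quad n Y v.
Proof. unfold quad, mvec, msub. rewrite <- vsum_minus. apply vsum_ext; intros.
  rewrite <- Rmult_minus_distr_l. f_equal. rewrite <- vsum_minus. apply vsum_ext; intros; ring. Qed.

Lemma mvec_minus n A u v i : mvec n A (fun k => u k - v k) i = mvec n A u i - mvec n A v i.
Proof. unfold mvec. rewrite <- vsum_minus. apply vsum_ext; intros; ring. Qed.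

Lemma quad_congr n J E P v :
  quad n (mmul n (mtr J) (mmul n (mtr E) (mmul n P (mmul n E J)))) v =
  quad n P (mvec n E (mvec n J v)).
Proof.
  rewrite !quad_dot.
  transitivity (dot n v (mvec n (mtr J) (mvec n (mtr E) (mvec n P (mvec n E (mvec n J v)))))).
  - apply dot_ext; auto; intros k _.
    rewrite mvec_mmul. apply mvec_ext; intros. rewrite mvec_mmul. apply mvec_ext; intros.
    rewrite mvec_mmul. apply mvec_ext; intros. rewrite mvec_mmul. auto.
  - rewrite dot_mtr. rewrite dot_mtr. auto. Qed.

Lemma ss_dot n v : ss n v = dot n v v.
Proof. reflexivity. Qed.

Lemma ss_mvec n J v : ss n (mvec n J v) <= mnorm n (mmul n (mtr J) J) * ss n v.
Proof.
  assert (ss n (mvec n J v) = quad n (mmul n (mtr J) J) v).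
  { rewrite ss_dot, quad_dot. rewrite <- dot_mtr. apply dot_ext; auto; intros.
    rewrite mvec_mmul. auto. }
  rewrite H. eapply Rle_trans; [apply Rle_abs| apply quad_bound]. Qed.

Lemma ss_zero_coord n v : ss n v <= 0 -> forall i, (i < n)%nat -> v i = 0.
Proof. intros H i Hi. assert (H1 := ss_term n v i Hi). assert (0 <= ss n v) by apply ss_nonneg.
  nra. Qed.

Lemma quad_zero n M v : (forall k, (k < n)%nat -> v k = 0) -> quad n M v = 0.
Proof. intros H. unfold quad. rewrite <- (vsum_zero n). apply vsum_ext; intros. rewrite H; auto; ring. Qed.

Lemma nonzero_ss n v : nonzero_vec n v -> 0 < ss n v.
Proof. intros [i [Hi Hv]]. assert (H := ss_term n v i Hi). assert (0 < v i * v i).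
  { destruct (Rlt_or_le 0 (v i)); nra. } lra. Qed.

Lemma quad_scal n M c v : quad n M (fun i => c * v i) = c * c * quad n M v.
Proof. unfold quad, mvec. rewrite <- vsum_scal. apply vsum_ext; intros.
  rewrite <- (vsum_ext n (fun k => c * (M i k * v k))) by (intros; ring).
  rewrite vsum_scal. ring. Qed.

Lemma ss_scal n c v : ss n (fun i => c * v i) = c * c * ss n v.
Proof. unfold ss. rewrite <- vsum_scal. apply vsum_ext; intros; ring. Qed.

Lemma cv_bounded u l : Un_cv u l -> exists M, forall k, Rabs (u k) <= M.
Proof. intros H. destruct (H 1 Rlt_0_1) as [N HN].
  exists (vsum N (fun k => Rabs (u k)) + Rabs l + 1). intros k.
  assert (0 <= vsum N (fun k => Rabs (u k))) by (apply vsum_nonneg; intros; apply Rabs_pos).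
  destruct (Nat.le_gt_cases N k) as [l0|l0].
  - assert (H1 := HN k l0). unfold Rdist in H1.
    assert (Rabs (u k) <= Rabs (u k - l) + Rabs l).
    { replace (u k) with ((u k - l) + l) at 1 by ring. apply Rabs_triang. } lra.
  - assert (Rabs (u k) <= vsum N (fun k => Rabs (u k))) by (apply (vsum_term_le N (fun k => Rabs (u k))); auto; intros; apply Rabs_pos).
    assert (0 <= Rabs l) by apply Rabs_pos. lra. Qed.

Lemma mid_vsum n i y : (i < n)%nat -> vsum n (fun l => mid i l * y l) = y i.
Proof. induction n; intros Hi; [lia|]. simpl.
  destruct (Nat.eq_dec i n).
  - subst. rewrite (vsum_ext n _ (fun _ => 0)). rewrite vsum_zero. unfold mid. rewrite Nat.eqb_refl. ring.
    intros l Hl. unfold mid. destruct (Nat.eqb_spec n l); [lia|]. ring.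
  - rewrite IHn by lia. unfold mid. destruct (Nat.eqb_spec i n); [lia|]. ring. Qed.

Section Exp.
Variable n : nat.
Variable A : mat.

Definition Cst := 1 + mnorm n A.

Lemma mpow_bound k i j : (i < n)%nat -> Rabs (mpow n A k i j) <= Cst ^ k.
Proof. revert i j. induction k; intros i j Hi; simpl.
  - unfold mid. destruct (Nat.eqb i j); rewrite ?Rabs_R1, ?Rabs_R0; lra.
  - unfold mmul. eapply Rle_trans; [apply vsum_abs|].
    apply Rle_trans with (vsum n (fun l => Rabs (A i l) * Cst ^ k)).
    + apply vsum_le; intros l Hl. rewrite Rabs_mult. apply Rmult_le_compat_l. apply Rabs_pos. auto.
    + rewrite vsum_scal_r. apply Rmult_le_compat_r. apply pow_le. unfold Cst. assert (H := mnorm_nonneg n A). lra.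
      unfold Cst, mnorm. assert (vsum n (fun l => Rabs (A i l)) <= vsum n (fun i => vsum n (fun j => Rabs (A i j)))).
      { apply (vsum_term_le n (fun i => vsum n (fun j => Rabs (A i j)))); auto. intros; apply vsum_nonneg; intros; apply Rabs_pos. }
      lra. Qed.

Definition acoef i j k := mpow n A k i j / INR (fact k).

Lemma acoef_radius i j x : (i < n)%nat -> Rbar_lt (Rabs x) (CV_radius (acoef i j)).
Proof. intros Hi. destruct (CV_radius_bounded (acoef i j)) as [Hub Hlub].
  assert (Hin : forall r, 0 <= r -> Rbar_le r (CV_radius (acoef i j))).
  { intros r Hr. apply Hub. destruct (cv_bounded _ _ (cv_speed_pow_fact (Cst * r))) as [M HM].
    exists M. intros k. eapply Rle_trans; [|apply (HM k)].
    assert (0 < INR (fact k)) by (apply lt_0_INR; apply lt_O_fact).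
    assert (HC : 0 <= Cst) by (unfold Cst; assert (H' := mnorm_nonneg n A); lra).
    rewrite (Rabs_pos_eq ((Cst*r)^k / INR (fact k))).
    2:{ unfold Rdiv. apply Rmult_le_pos. apply pow_le. nra. left; apply Rinv_0_lt_compat; auto. }
    rewrite Rpow_mult_distr. unfold acoef.
    rewrite Rabs_mult. unfold Rdiv. rewrite Rabs_mult. rewrite (Rabs_pos_eq (/ INR (fact k))) by (left; apply Rinv_0_lt_compat; auto).
    rewrite (Rabs_pos_eq (r ^ k)) by (apply pow_le; auto).
    assert (H1 := mpow_bound k i j Hi). assert (0 < / INR (fact k)) by (apply Rinv_0_lt_compat; auto).
    assert (0 <= r ^ k) by (apply pow_le; auto).
    apply Rle_trans with (Cst ^ k * / INR (fact k) * r ^ k).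
    apply Rmult_le_compat_r; auto. apply Rmult_le_compat_r; lra. right; ring. }
  assert (H := Hin (Rabs x + 1) ltac:(assert (H0 := Rabs_pos x); lra)).
  destruct (CV_radius (acoef i j)); simpl in *; auto; lra. Qed.

Lemma expm_PSeries t i j : (i < n)%nat -> expm n A t i j = PSeries (acoef i j) t.
Proof. intros Hi. unfold expm.
  assert (Hcv : Un_cv (fun N => sum_f_R0 (fun k => t ^ k / INR (fact k) * mpow n A k i j) N) (PSeries (acoef i j) t)).
  { assert (H := PSeries_correct (acoef i j) t (CV_radius_inside _ _ (acoef_radius i j t Hi))).
    apply is_pseries_R in H. apply is_series_Reals in H. unfold infinite_sum in H.
    intros eps Heps. destruct (H eps Heps) as [N HN]. exists N. intros m Hm.
    rewrite (sum_eq _ (fun k => acoef i j k * t ^ k)). apply HN; auto.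
    intros; unfold acoef; unfold Rdiv; ring. }
  assert (Hex : exists l, Un_cv (fun N => sum_f_R0 (fun k => t ^ k / INR (fact k) * mpow n A k i j) N) l) by eauto.
  assert (H2 := epsilon_spec (inhabits 0) _ Hex). simpl in H2.
  eapply UL_sequence; eauto. Qed.

Lemma ex_pseries_vsum (b : nat -> nat -> R) (c : nat -> R) m x :
  (forall l, (l < m)%nat -> ex_pseries (b l) x) ->
  ex_pseries (fun k => vsum m (fun l => c l * b l k)) x /\
  PSeries (fun k => vsum m (fun l => c l * b l k)) x = vsum m (fun l => c l * PSeries (b l) x).
Proof. induction m; intros H; simpl.
  - split. apply CV_radius_inside. rewrite CV_radius_const_0. simpl; auto.
    apply PSeries_const_0.
  - destruct IHm as [IH1 IH2]. intros; apply H; lia.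
    assert (Hb : ex_pseries (b m) x) by (apply H; lia).
    assert (Hs : ex_pseries (PS_scal (c m) (b m)) x).
    { apply ex_pseries_scal; auto. simpl. apply Rmult_comm. }
    split.
    + apply ex_pseries_ext with (PS_plus (fun k => vsum m (fun l => c l * b l k)) (PS_scal (c m) (b m))).
      intros; reflexivity. apply ex_pseries_plus; auto.
    + rewrite (PSeries_ext _ (PS_plus (fun k => vsum m (fun l => c l * b l k)) (PS_scal (c m) (b m)))).
      2: intros; reflexivity.
      rewrite PSeries_plus; auto. rewrite IH2, PSeries_scal. auto. Qed.

Lemma expm_derive t i j : (i < n)%nat ->
  derivable_pt_lim (fun s => expm n A s i j) t (vsum n (fun l => A i l * expm n A t l j)).
Proof. intros Hi.
  assert (Hf : (fun s => expm n A s i j) = PSeries (acoef i j)).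
  { apply functional_extensionality; intros s. apply expm_PSeries; auto. }
  rewrite Hf. apply is_derive_Reals.
  assert (H := is_derive_PSeries (acoef i j) t (acoef_radius i j t Hi)).
  replace (vsum n (fun l => A i l * expm n A t l j)) with (PSeries (PS_derive (acoef i j)) t); auto.
  rewrite (PSeries_ext _ (fun k => vsum n (fun l => A i l * acoef l j k))).
  - rewrite (proj2 (ex_pseries_vsum (fun l => acoef l j) (fun l => A i l) n t
      (fun l Hl => CV_radius_inside _ _ (acoef_radius l j t Hl)))).
    apply vsum_ext; intros l Hl. rewrite expm_PSeries; auto.
  - intros k. unfold PS_derive, acoef. simpl (mpow n A (S k)). unfold mmul.
    rewrite (vsum_ext n (fun l => A i l * (mpow n A k l j / INR (fact k))) (fun l => (A i l * mpow n A k l j) * / INR (fact k))) by (intros; unfold Rdiv; ring).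
    rewrite vsum_scal_r. rewrite fact_simpl, mult_INR.
    assert (0 < INR (fact k)) by (apply lt_0_INR; apply lt_O_fact).
    assert (0 < INR (S k)) by (apply lt_0_INR; lia).
    field. lra. Qed.

Definition Ev (s : R) (y : vec) : vec := mvec n (expm n A s) y.

Lemma derive_vsum m (f : nat -> R -> R) d x :
  (forall l, (l < m)%nat -> derivable_pt_lim (f l) x (d l)) ->
  derivable_pt_lim (fun t => vsum m (fun l => f l t)) x (vsum m d).
Proof. induction m; intros H; simpl.
  - apply derivable_pt_lim_const.
  - apply (derivable_pt_lim_plus (fun t => vsum m (fun l => f l t)) (f m)).
    apply IHm; intros; apply H; lia. apply H; lia. Qed.

Lemma Ev_derive s y i : (i < n)%nat ->
  derivable_pt_lim (fun r => Ev r y i) s (mvec n A (Ev s y) i).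
Proof. intros Hi. unfold Ev, mvec at 1.
  replace (mvec n A (mvec n (expm n A s) y) i) with
     (vsum n (fun l => vsum n (fun m => A i m * expm n A s m l) * y l)).
  - apply derive_vsum. intros l Hl.
    replace (vsum n (fun m => A i m * expm n A s m l) * y l) with (vsum n (fun m => A i m * expm n A s m l) * y l + expm n A s i l * 0) by ring.
    apply (derivable_pt_lim_mult (fun r => expm n A r i l) (fun _ => y l)).
    apply expm_derive; auto. apply derivable_pt_lim_const. 
  - unfold mvec. transitivity (vsum n (fun l => vsum n (fun m => A i m * (expm n A s m l * y l)))).
    apply vsum_ext; intros. rewrite <- vsum_scal_r. apply vsum_ext; intros; ring.
    rewrite vsum_swap. apply vsum_ext; intros. rewrite vsum_scal. auto. Qed.

Lemma Ev_cont s y i : (i < n)%nat -> continuity_pt (fun r => Ev r y i) s.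
Proof. intros Hi. apply derivable_continuous_pt. exists (mvec n A (Ev s y) i). apply Ev_derive; auto. Qed.

Lemma Ev_0 y i : (i < n)%nat -> Ev 0 y i = y i.
Proof. intros Hi. unfold Ev, mvec. rewrite <- (mid_vsum n i y Hi). apply vsum_ext; intros l Hl.
  rewrite expm_PSeries, PSeries_0 by auto. unfold acoef. simpl. unfold Rdiv. rewrite Rinv_1. ring. Qed.

Lemma expm_cont t i j : (i < n)%nat -> continuity_pt (fun s => expm n A s i j) t.
Proof. intros Hi. apply derivable_continuous_pt. eexists. apply expm_derive; auto. Qed.
End Exp.

Lemma nonincr f df s t : s < t -> (forall x, s <= x <= t -> derivable_pt_lim f x (df x)) ->
  (forall x, s <= x <= t -> df x <= 0) -> f t <= f s.
Proof. intros Hst Hd Hn.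
  destruct (MVT_gen f s t df) as [c [Hc Heq]].
  - intros x Hx. rewrite Rmin_left, Rmax_right in Hx by lra. apply is_derive_Reals. apply Hd; lra.
  - intros x Hx. rewrite Rmin_left, Rmax_right in Hx by lra. apply derivable_continuous_pt.
    exists (df x). apply Hd; lra.
  - rewrite Rmin_left, Rmax_right in Hc by lra. assert (H := Hn c Hc). nra. Qed.

Lemma right_lim_le f a t l : a < t -> (forall s, a < s < t -> f t <= f s) ->
  filterlim f (at_right a) (locally l) -> f t <= l.
Proof. intros Hat Hd Hl. destruct (Rle_or_lt (f t) l); auto. exfalso.
  rewrite filterlim_locally in Hl. destruct (Hl (mkposreal (f t - l) ltac:(lra))) as [d Hd'].
  set (s := a + Rmin d (t - a) / 2).
  assert (Hm1 : 0 < Rmin d (t - a)) by (apply Rmin_pos; [apply cond_pos|lra]).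
  assert (Hm2 : Rmin d (t - a) <= d) by apply Rmin_l.
  assert (Hm3 : Rmin d (t - a) <= t - a) by apply Rmin_r.
  assert (H1 := Hd' s). rewrite ball_R in H1. simpl in H1.
  assert (H2 : Rabs (f s - l) < f t - l). apply H1. apply ball_R. unfold s.
    rewrite Rabs_pos_eq; lra. unfold s; lra.
  assert (H3 := Hd s ltac:(unfold s; lra)). apply Rabs_lt_between in H2. lra. Qed.

Lemma left_lim_le f a b l C : a < b -> (forall s, a < s < b -> f s <= C) ->
  filterlim f (at_left b) (locally l) -> l <= C.
Proof. intros Hab Hd Hl. destruct (Rle_or_lt l C); auto. exfalso.
  rewrite filterlim_locally in Hl. destruct (Hl (mkposreal (l - C) ltac:(lra))) as [d Hd'].
  set (s := b - Rmin d (b - a) / 2).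
  assert (Hm1 : 0 < Rmin d (b - a)) by (apply Rmin_pos; [apply cond_pos|lra]).
  assert (Hm2 : Rmin d (b - a) <= d) by apply Rmin_l.
  assert (Hm3 : Rmin d (b - a) <= b - a) by apply Rmin_r.
  assert (H1 := Hd' s). rewrite ball_R in H1. simpl in H1.
  assert (H2 : Rabs (f s - l) < l - C). apply H1. apply ball_R. unfold s.
    rewrite Rabs_left; lra. unfold s; lra.
  assert (H3 := Hd s ltac:(unfold s; lra)). apply Rabs_lt_between in H2. lra. Qed.

Lemma ss_derive n A (y : R -> vec) s :
  (forall i, (i < n)%nat -> derivable_pt_lim (fun r => y r i) s (mvec n A (y s) i)) ->
  derivable_pt_lim (fun r => ss n (y r)) s (2 * quad n A (y s)).
Proof. intros H. unfold ss.
  replace (2 * quad n A (y s)) with (vsum n (fun i => mvec n A (y s) i * y s i + y s i * mvec n A (y s) i)).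
  - apply (derive_vsum n (fun i r => y r i * y r i)). intros l Hl.
    apply (derivable_pt_lim_mult (fun r => y r l) (fun r => y r l)); apply H; auto.
  - unfold quad. rewrite <- vsum_scal. apply vsum_ext; intros; ring. Qed.

Lemma energy n A (y : R -> vec) (z : vec) a b :
  a < b ->
  (forall s, a < s < b -> forall i, (i < n)%nat -> derivable_pt_lim (fun r => y r i) s (mvec n A (y s) i)) ->
  (forall i, (i < n)%nat -> right_lim (fun r => y r i) a (z i)) ->
  forall t, a < t < b -> ss n (y t) <= exp (2 * mnorm n A * (t - a)) * ss n z.
Proof. intros Hab Hd Hr t Ht.
  set (L := mnorm n A).
  set (g := fun s => exp (- (2 * L * (s - a))) * ss n (y s)).
  assert (Hg : forall s, a < s < b -> derivable_pt_lim g s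
     (exp (- (2 * L * (s - a))) * (- (2 * L)) * ss n (y s) + exp (- (2 * L * (s - a))) * (2 * quad n A (y s)))).
  { intros s Hs. unfold g. apply (derivable_pt_lim_mult (fun s => exp (- (2 * L * (s - a)))) (fun s => ss n (y s))).
    - apply (derivable_pt_lim_comp (fun s => - (2 * L * (s - a))) exp).
      replace (- (2 * L)) with (- (2 * L * (1 - 0))) by ring.
      apply derivable_pt_lim_opp. apply derivable_pt_lim_scal. apply derivable_pt_lim_minus.
      apply derivable_pt_lim_id. apply derivable_pt_lim_const. apply derivable_pt_lim_exp.
    - apply ss_derive. apply Hd; auto. }
  assert (Hdec : forall s, a < s < t -> g t <= g s).
  { intros s Hs. eapply nonincr. lra. intros x Hx. apply Hg. lra.
    intros x Hx. assert (Hq := quad_bound n A (y x)). apply Rabs_le_between in Hq.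
    assert (0 < exp (- (2 * L * (x - a)))) by apply exp_pos.
    assert (0 <= ss n (y x)) by apply ss_nonneg. fold L in Hq. nra. }
  assert (Hlim : filterlim g (at_right a) (locally (exp (- (2 * L * (a - a))) * ss n z))).
  { apply (@lim_mult _ (at_right a) _).
    - apply (cont_lim (at_right a) (fun s => exp (- (2 * L * (s - a))))).
      apply derivable_continuous_pt. eexists. apply (derivable_pt_lim_comp (fun s => - (2 * L * (s - a))) exp).
      apply derivable_pt_lim_opp. apply derivable_pt_lim_scal. apply derivable_pt_lim_minus.
      apply derivable_pt_lim_id. apply derivable_pt_lim_const. apply derivable_pt_lim_exp.
      apply filter_le_within.
    - unfold ss. apply (lim_vsum _ n (fun i r => y r i * y r i)). intros i Hi.
      apply (@lim_mult _ (at_right a) _); apply right_lim_iff; auto. }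
  replace (exp (- (2 * L * (a - a))) * ss n z) with (ss n z) in Hlim
    by (replace (- (2 * L * (a - a))) with 0 by ring; rewrite exp_0; ring).
  assert (Hgt := right_lim_le g a t _ (proj1 Ht) Hdec Hlim).
  unfold g in Hgt.
  replace (ss n (y t)) with (exp (2 * L * (t - a)) * (exp (- (2 * L * (t - a))) * ss n (y t))).
  apply Rmult_le_compat_l. left; apply exp_pos. auto.
  rewrite <- Rmult_assoc, <- exp_plus. replace (2 * L * (t - a) + - (2 * L * (t - a))) with 0 by ring.
  rewrite exp_0; ring. Qed.

Lemma shift_cont n A y a s i : (i < n)%nat ->
  continuity_pt (fun r => Ev n A (r - a) y i) s.
Proof. intros Hi. apply (continuity_pt_comp (fun r => r - a) (fun r => Ev n A r y i)).
  apply continuity_pt_minus. apply continuity_pt_id. apply continuity_pt_const. intros u v; auto.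
  apply Ev_cont; auto. Qed.

Lemma ode_match n A (x : R -> vec) (y0 : vec) a b :
  a < b ->
  (forall s, a < s < b -> forall i, (i < n)%nat -> derivable_pt_lim (fun r => x r i) s (mvec n A (x s) i)) ->
  (forall i, (i < n)%nat -> right_lim (fun r => x r i) a (y0 i)) ->
  forall t, a < t < b -> forall i, (i < n)%nat -> x t i = Ev n A (t - a) y0 i.
Proof. intros Hab Hd Hr t Ht.
  set (d := fun r (i : nat) => x r i - Ev n A (r - a) y0 i).
  assert (H := energy n A d (fun _ => 0) a b Hab).
  assert (Hss : ss n (fun _ : nat => 0) = 0) by (unfold ss; rewrite (vsum_ext n _ (fun _ => 0)) by (intros; ring); apply vsum_zero).
  assert (Hle : ss n (d t) <= exp (2 * mnorm n A * (t - a)) * ss n (fun _ => 0)).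
  { apply H; auto.
    - intros s Hs i Hi. unfold d. rewrite mvec_minus.
      apply (derivable_pt_lim_minus (fun r => x r i) (fun r => Ev n A (r - a) y0 i)).
      apply Hd; auto.
      rewrite <- (Rmult_1_r (mvec n A (Ev n A (s - a) y0) i)).
      apply (derivable_pt_lim_comp (fun r => r - a) (fun r => Ev n A r y0 i)).
      replace 1 with (1 - 0) by ring. apply derivable_pt_lim_minus. apply derivable_pt_lim_id. apply derivable_pt_lim_const.
      apply Ev_derive; auto.
    - intros i Hi. unfold d. apply right_lim_iff.
      replace 0 with (y0 i - Ev n A (a - a) y0 i) by (replace (a - a) with 0 by ring; rewrite Ev_0; auto; ring).
      apply (@lim_minus _ (at_right a) _). apply right_lim_iff; auto.
      apply (cont_lim (at_right a) (fun r => Ev n A (r - a) y0 i)). apply shift_cont; auto.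
      apply filter_le_within. }
  rewrite Hss, Rmult_0_r in Hle.
  intros i Hi. assert (H0 := ss_zero_coord n (d t) Hle i Hi). unfold d in H0. lra. Qed.

Lemma ode_match_end n A (x : R -> vec) (y0 : vec) a b :
  a < b ->
  (forall s, a < s < b -> forall i, (i < n)%nat -> derivable_pt_lim (fun r => x r i) s (mvec n A (x s) i)) ->
  (forall i, (i < n)%nat -> right_lim (fun r => x r i) a (y0 i)) ->
  (forall i, (i < n)%nat -> left_lim (fun r => x r i) b (x b i)) ->
  forall i, (i < n)%nat -> x b i = Ev n A (b - a) y0 i.
Proof. intros Hab Hd Hr Hl i Hi.
  assert (H1 : filterlim (fun r => x r i) (at_left b) (locally (x b i))) by (apply left_lim_iff; auto).
  assert (H2 : filterlim (fun r => x r i) (at_left b) (locally (Ev n A (b - a) y0 i))).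
  { apply (filterlim_ext_loc (fun r => Ev n A (r - a) y0 i)).
    - exists (mkposreal (b - a) ltac:(lra)). intros s Hs Hsb. apply ball_R in Hs. simpl in Hs.
      apply Rabs_lt_between in Hs. unfold minus, plus, opp in Hs; simpl in Hs.
      symmetry. apply (ode_match n A x y0 a b); auto. lra.
    - apply (cont_lim (at_left b) (fun r => Ev n A (r - a) y0 i)). apply shift_cont; auto.
      apply filter_le_within. }
  apply (filterlim_locally_unique (F := at_left b) (fun r => x r i)); auto.
Qed.

Lemma cv_filt u l : Un_cv u l <-> filterlim u eventually (locally l).
Proof. rewrite <- is_lim_seq_Reals. unfold is_lim_seq. simpl. tauto. Qed.

Definition subseq (phi : nat -> nat) := forall k, (phi k < phi (S k))%nat.

Lemma subseq_mono phi : subseq phi -> forall k m, (k < m)%nat -> (phi k < phi m)%nat.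
Proof. intros H k m Hkm. induction Hkm. apply H. specialize (H m). lia. Qed.

Lemma subseq_ge phi : subseq phi -> forall k, (k <= phi k)%nat.
Proof. intros H k. induction k. lia. specialize (H k). lia. Qed.

Lemma cv_subseq u l phi : Un_cv u l -> subseq phi -> Un_cv (fun k => u (phi k)) l.
Proof. intros H Hp eps Heps. destruct (H eps Heps) as [N HN]. exists N. intros k Hk.
  apply HN. assert (H1 := subseq_ge phi Hp k). lia. Qed.

Lemma subseq_comp phi psi : subseq phi -> subseq psi -> subseq (fun k => phi (psi k)).
Proof. intros H1 H2 k. apply subseq_mono; auto. Qed.

Lemma inv_small eps : 0 < eps -> exists K, forall k, (K <= k)%nat -> / INR (S k) < eps.
Proof. intros He. destruct (INR_archimed eps 1 He) as [K HK]. exists K. intros k Hk.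
  assert (INR K <= INR k) by (apply le_INR; auto).
  assert (0 < INR (S k)) by (apply lt_0_INR; lia). rewrite S_INR in *.
  apply Rmult_lt_reg_r with (INR k + 1). lra. rewrite Rinv_l by lra. nra. Qed.

Lemma BW1 u a b : (forall k, a <= u k <= b) ->
  exists phi l, subseq phi /\ Un_cv (fun k => u (phi k)) l.
Proof. intros Hb.
  destruct (Bolzano_Weierstrass u (fun c => a <= c <= b) (compact_P3 a b) Hb) as [l Hl].
  assert (Hp : forall N k, exists p, (N <= p)%nat /\ Rabs (u p - l) < / INR (S k)).
  { intros N k. assert (Hpos : 0 < / INR (S k)) by (apply Rinv_0_lt_compat; apply lt_0_INR; lia).
    destruct (Hl (disc l (mkposreal _ Hpos)) N) as [p [Hp1 Hp2]].
    exists (mkposreal _ Hpos). intros y Hy; auto. exists p; split; auto. }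
  set (pick := fun N k => epsilon (inhabits 0%nat) (fun p => (N <= p)%nat /\ Rabs (u p - l) < / INR (S k))).
  assert (Hpick : forall N k, (N <= pick N k)%nat /\ Rabs (u (pick N k) - l) < / INR (S k)).
  { intros N k. unfold pick. apply epsilon_spec. apply Hp. }
  set (phi := fix phi k := match k with O => pick O O | S k' => pick (S (phi k')) (S k') end).
  exists phi, l. split.
  - intros k. simpl. destruct (Hpick (S (phi k)) (S k)). lia.
  - intros eps Heps. destruct (inv_small eps Heps) as [K HK]. exists K. intros k Hk.
    unfold Rdist. apply Rlt_trans with (/ INR (S k)); auto.
    destruct k; simpl; [apply (Hpick O O) | apply (Hpick (S (phi k)) (S k))]. Qed.

Lemma BWn (u : nat -> nat -> R) B m : (forall i k, (i < m)%nat -> Rabs (u i k) <= B) ->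
  exists phi (l : nat -> R), subseq phi /\ forall i, (i < m)%nat -> Un_cv (fun k => u i (phi k)) (l i).
Proof. induction m; intros Hb.
  - exists (fun k => k), (fun _ => 0). split. intros k; lia. intros; lia.
  - destruct IHm as [phi [l [Hphi Hl]]]. intros; apply Hb; lia.
    destruct (BW1 (fun k => u m (phi k)) (-B) B) as [psi [lm [Hpsi Hlm]]].
    { intros k. apply Rabs_le_between. apply Hb; lia. }
    exists (fun k => phi (psi k)), (fun i => if Nat.eqb i m then lm else l i). split.
    apply subseq_comp; auto.
    intros i Hi. destruct (Nat.eqb_spec i m). subst; auto.
    apply (cv_subseq (fun k => u i (phi k))); auto. apply Hl; lia. Qed.

Lemma cv_le_const u l b : (forall k, u k <= b) -> Un_cv u l -> l <= b.
Proof. intros H Hl. destruct (Rle_or_lt l b); auto. destruct (Hl (l - b) ltac:(lra)) as [N HN].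
  specialize (HN N (le_n _)). specialize (H N). unfold Rdist in HN. apply Rabs_lt_between in HN. lra. Qed.

Lemma cv_ge_const u l b : (forall k, b <= u k) -> Un_cv u l -> b <= l.
Proof. intros H Hl. destruct (Rle_or_lt b l); auto. destruct (Hl (b - l) ltac:(lra)) as [N HN].
  specialize (HN N (le_n _)). specialize (H N). unfold Rdist in HN. apply Rabs_lt_between in HN. lra. Qed.

Lemma cv_ge_inv u l : (forall k, - / INR (S k) < u k) -> Un_cv u l -> 0 <= l.
Proof. intros H Hl. destruct (Rle_or_lt 0 l); auto. destruct (Hl (- l / 2) ltac:(lra)) as [N HN].
  destruct (inv_small (- l / 2) ltac:(lra)) as [K HK].
  specialize (HN (max N K) ltac:(lia)). specialize (HK (max N K) ltac:(lia)). specialize (H (max N K)).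
  unfold Rdist in HN. apply Rabs_lt_between in HN. lra. Qed.

Lemma normalize n M v c : 0 < c -> - c * ss n v < quad n M v ->
  exists w, ss n w = 1 /\ - c < quad n M w.
Proof. intros Hc Hlt.
  assert (Hs : 0 < ss n v).
  { destruct (Rle_lt_dec (ss n v) 0); auto. exfalso.
    assert (Hz := ss_zero_coord n v r). rewrite (quad_zero n M v Hz) in Hlt.
    assert (ss n v = 0) by (assert (H := ss_nonneg n v); lra). rewrite H in Hlt. lra. }
  set (s := sqrt (ss n v)). assert (Hs0 : 0 < s) by (apply sqrt_lt_R0; auto).
  assert (Hss : s * s = ss n v) by (apply sqrt_sqrt; lra).
  exists (fun i => / s * v i). split.
  - rewrite ss_scal. rewrite <- Hss. field. lra.
  - rewrite quad_scal. apply Rmult_lt_reg_l with (s * s). nra.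
    replace (s * s * (/ s * / s * quad n M v)) with (quad n M v) by (field; lra). rewrite Hss. nra. Qed.

Lemma unif_negdef n (F : R -> mat) a b :
  a <= b ->
  (forall i j, (i < n)%nat -> (j < n)%nat -> forall th, a <= th <= b -> continuity_pt (fun t => F t i j) th) ->
  (forall th, a <= th <= b -> neg_def n (F th)) ->
  exists c, 0 < c /\ forall th v, a <= th <= b -> quad n (F th) v <= - c * ss n v.
Proof.
  intros Hab Hc Hneg. apply NNPP; intros Hno.
  assert (Hm : forall m : nat, exists p : R * vec, (a <= fst p <= b) /\ ss n (snd p) = 1 /\
     - / INR (S m) < quad n (F (fst p)) (snd p)).
  { intros m. assert (Hpos : 0 < / INR (S m)) by (apply Rinv_0_lt_compat; apply lt_0_INR; lia).
    apply NNPP; intros Hnot. apply Hno. exists (/ INR (S m)). split; auto.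
    intros th v Hth. apply Rnot_lt_le. intros Hlt. apply Hnot.
    destruct (normalize n (F th) v _ Hpos Hlt) as [w [Hw1 Hw2]]. exists (th, w). simpl; auto. }
  set (p := fun m => epsilon (inhabits (0, fun _ : nat => 0)) (fun p : R * vec => (a <= fst p <= b) /\ ss n (snd p) = 1 /\
     - / INR (S m) < quad n (F (fst p)) (snd p))).
  assert (Hp : forall m, (a <= fst (p m) <= b) /\ ss n (snd (p m)) = 1 /\ - / INR (S m) < quad n (F (fst (p m))) (snd (p m))).
  { intros m. unfold p. apply epsilon_spec. apply Hm. }
  destruct (BWn (fun i k => snd (p k) i) 1 n) as [phi [l [Hphi Hl]]].
  { intros i k Hi. destruct (Hp k) as [_ [H1 _]]. assert (H2 := ss_term n (snd (p k)) i Hi).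
    rewrite H1 in H2. assert (Rabs (snd (p k) i) * Rabs (snd (p k) i) <= 1) by (rewrite <- Rabs_mult, Rabs_pos_eq; nra).
    assert (0 <= Rabs (snd (p k) i)) by apply Rabs_pos. nra. }
  destruct (BW1 (fun k => fst (p (phi k))) a b) as [psi [ths [Hpsi Hths]]].
  { intros k. apply Hp. }
  set (sg := fun k => phi (psi k)).
  assert (Hsg : subseq sg) by (unfold sg; exact (subseq_comp phi psi Hphi Hpsi)).
  assert (Hw : forall i, (i < n)%nat -> filterlim (fun k => snd (p (sg k)) i) eventually (locally (l i))).
  { intros i Hi. apply cv_filt. apply (cv_subseq (fun k => snd (p (phi k)) i)); auto. }
  assert (Hthab : a <= ths <= b).
  { split. apply (cv_ge_const _ _ _ (fun k => proj1 (proj1 (Hp (phi (psi k))))) Hths).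
    apply (cv_le_const _ _ _ (fun k => proj2 (proj1 (Hp (phi (psi k))))) Hths). }
  assert (HF : forall i j, (i < n)%nat -> (j < n)%nat ->
     filterlim (fun k => F (fst (p (sg k))) i j) eventually (locally (F ths i j))).
  { intros i j Hi Hj. apply cv_filt. apply (continuity_seq (fun t => F t i j)). apply Hc; auto. auto. }
  assert (Hss : ss n l = 1).
  { assert (H1 : filterlim (fun k => ss n (snd (p (sg k)))) eventually (locally (ss n l))).
    { unfold ss. apply (@lim_vsum _ eventually _ n (fun i k => snd (p (sg k)) i * snd (p (sg k)) i)).
      intros i Hi. apply (@lim_mult _ eventually _); apply Hw; auto. }
    apply cv_filt in H1. eapply UL_sequence; eauto.
    apply (Un_cv_ext (fun _ => 1)). intros k. symmetry. apply Hp. intros eps He. exists O. intros. unfold Rdist.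
    rewrite Rminus_diag, Rabs_R0; auto. }
  assert (Hq : 0 <= quad n (F ths) l).
  { assert (H1 : filterlim (fun k => quad n (F (fst (p (sg k)))) (snd (p (sg k)))) eventually (locally (quad n (F ths) l))).
    { unfold quad, mvec. apply (@lim_vsum _ eventually _ n (fun i k => snd (p (sg k)) i * vsum n (fun j => F (fst (p (sg k))) i j * snd (p (sg k)) j))).
      intros i Hi. apply (@lim_mult _ eventually _). apply Hw; auto.
      apply (@lim_vsum _ eventually _ n (fun j k => F (fst (p (sg k))) i j * snd (p (sg k)) j)).
      intros j Hj. apply (@lim_mult _ eventually _). apply HF; auto. apply Hw; auto. }
    apply cv_filt in H1. eapply cv_ge_inv; [|exact H1].
    intros k. destruct (Hp (sg k)) as [_ [_ H2]]. eapply Rle_lt_trans; [|exact H2].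
    apply Ropp_le_contravar. apply Rinv_le_contravar. apply lt_0_INR; lia.
    apply le_INR. assert (H3 := subseq_ge sg Hsg k). lia. }
  assert (Hnz : nonzero_vec n l).
  { apply NNPP; intros Hz. assert (ss n l <= 0).
    { unfold ss. rewrite <- (vsum_zero n). apply vsum_le. intros i Hi.
      destruct (Req_dec (l i) 0) as [E|E]. rewrite E; lra. exfalso; apply Hz; exists i; auto. }
    lra. }
  assert (H := Hneg ths Hthab l Hnz). lra.
Qed.

Lemma exp_le_mono x y : x <= y -> exp x <= exp y.
Proof. intros H. destruct (Req_dec x y). subst; lra. left; apply exp_increasing; lra. Qed.

Lemma interval_bound n A (x : R -> vec) z a b :
  a < b ->
  (forall s, a < s < b -> forall i, (i < n)%nat -> derivable_pt_lim (fun r => x r i) s (mvec n A (x s) i)) ->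
  (forall i, (i < n)%nat -> right_lim (fun r => x r i) a (z i)) ->
  (forall i, (i < n)%nat -> left_lim (fun r => x r i) b (x b i)) ->
  forall t, a < t <= b -> ss n (x t) <= exp (2 * mnorm n A * (b - a)) * ss n z.
Proof. intros Hab Hd Hr Hl.
  assert (Hin : forall t, a < t < b -> ss n (x t) <= exp (2 * mnorm n A * (b - a)) * ss n z).
  { intros t Ht. eapply Rle_trans. apply (energy n A x z a b); auto.
    apply Rmult_le_compat_r. apply ss_nonneg. apply exp_le_mono.
    assert (H := mnorm_nonneg n A). nra. }
  intros t Ht. destruct (Req_dec t b). 2: apply Hin; lra. subst t.
  apply (left_lim_le (fun r => ss n (x r)) a b); auto.
  unfold ss. apply (@lim_vsum _ (at_left b) _ n (fun i r => x r i * x r i)).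
  intros i Hi. apply (@lim_mult _ (at_left b) _); apply left_lim_iff; auto. Qed.

Lemma cont_vsum m (f : nat -> R -> R) x :
  (forall l, (l < m)%nat -> continuity_pt (f l) x) -> continuity_pt (fun t => vsum m (fun l => f l t)) x.
Proof. induction m; intros H; simpl. apply continuity_pt_const. intros u v; auto.
  apply (continuity_pt_plus (fun t => vsum m (fun l => f l t)) (f m)). apply IHm; intros; apply H; lia. apply H; lia. Qed.

Lemma vnorm_ss n v : vnorm n v = sqrt (ss n v).
Proof. unfold vnorm, ss. f_equal. apply vsum_ext; intros; ring. Qed.

Lemma quad_neg n P v : quad n (fun i j => - P i j) v = - quad n P v.
Proof. unfold quad, mvec.
  transitivity (vsum n (fun i => -1 * (v i * vsum n (fun k => P i k * v k)))).
  - apply vsum_ext; intros. replace (vsum n (fun k => - P i k * v k)) with (-1 * vsum n (fun k => P i k * v k)). ring.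
    rewrite <- vsum_scal. apply vsum_ext; intros; ring.
  - rewrite vsum_scal; ring. Qed.

Section Main.
Variable n : nat.
Variables A J P : mat.
Variables Tmin Tmax t0 : R.
Variable tseq : nat -> R.
Hypothesis hT0 : 0 < Tmin.
Hypothesis hT : Tmin <= Tmax.
Hypothesis hseq : impulse_seq_in t0 Tmin Tmax tseq.

Lemma tseq_lt m k : (m < k)%nat -> tseq m < tseq k.
Proof. intros H. induction H. destruct hseq as [_ Hs]. specialize (Hs m). lra.
  destruct hseq as [_ Hs]. specialize (Hs m0). lra. Qed.

Lemma tseq_le m k : (m <= k)%nat -> tseq m <= tseq k.
Proof. intros H. destruct (Nat.eq_dec m k). subst; lra. left; apply tseq_lt; lia. Qed.

Lemma not_imp_between k s : tseq k < s < tseq (S k) -> ~ is_impulse_time tseq s.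
Proof. intros Hs [m Hm]. destruct (Nat.le_gt_cases m k).
  assert (H1 := tseq_le m k H). lra. assert (H1 := tseq_le (S k) m H). lra. Qed.

Lemma not_imp_first s : s < tseq 0 -> ~ is_impulse_time tseq s.
Proof. intros Hs [m Hm]. assert (H1 := tseq_le 0 m ltac:(lia)). lra. Qed.

Lemma tseq_grow k : tseq 0 + INR k * Tmin <= tseq k.
Proof. induction k. simpl; lra. destruct hseq as [_ Hs]. specialize (Hs k). rewrite S_INR. lra. Qed.

Lemma locate t : tseq 0 < t -> exists k, tseq k < t <= tseq (S k).
Proof. intros Ht.
  destruct (INR_archimed Tmin (t - tseq 0) hT0) as [N HN].
  assert (HtN : t <= tseq N) by (assert (H := tseq_grow N); lra).
  clear HN. induction N. lra.
  destruct (Rle_or_lt t (tseq N)). apply IHN; auto. exists N; lra. Qed.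
End Main.

Lemma cont_mult2 f g x : continuity_pt f x -> continuity_pt g x -> continuity_pt (fun t => f t * g t) x.
Proof. intros; apply continuity_pt_mult; auto. Qed.
Lemma cont_c c x : continuity_pt (fun _ => c) x.
Proof. apply continuity_pt_const. intros u v; auto. Qed.

Theorem lemma1 (n : nat) (A J : mat) (Tmin Tmax : R)
  (hT0 : 0 < Tmin) (hT : Tmin <= Tmax)
  (hP : exists P : mat, symmetric n P /\ pos_def n P /\
     forall theta, Tmin <= theta <= Tmax ->
       neg_def n (msub (mmul n (mtr J) (mmul n (mtr (expm n A theta))
                          (mmul n P (mmul n (expm n A theta) J)))) P)) :
  forall (t0 : R) (tseq : nat -> R),
    impulse_seq_in t0 Tmin Tmax tseq -> GAS n A J t0 tseq.
Proof.
  intros t0 tseq hseq. destruct hP as [P [_ [Ppos Hneg]]].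
  set (M := fun th => msub (mmul n (mtr J) (mmul n (mtr (expm n A th))
                          (mmul n P (mmul n (expm n A th) J)))) P).
  assert (HMc : forall i j, (i < n)%nat -> (j < n)%nat -> forall th, Tmin <= th <= Tmax ->
      continuity_pt (fun t => M t i j) th).
  { intros i j Hi Hj th _. unfold M, msub, mmul, mtr.
    apply continuity_pt_minus; [|apply cont_c].
    apply cont_vsum; intros k1 Hk1. apply cont_mult2; [apply cont_c|].
    apply cont_vsum; intros k2 Hk2. apply cont_mult2; [apply expm_cont; auto|].
    apply cont_vsum; intros k3 Hk3. apply cont_mult2; [apply cont_c|].
    apply cont_vsum; intros k4 Hk4. apply cont_mult2; [apply expm_cont; auto|apply cont_c]. }
  destruct (unif_negdef n (fun _ => fun i j => - P i j) 0 0) as [c1 [Hc1 Hc1b]].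
  { lra. } { intros; apply cont_c. }
  { intros th _ v Hv. rewrite quad_neg. assert (H := Ppos v Hv). lra. }
  assert (HV1 : forall v, c1 * ss n v <= quad n P v).
  { intros v. assert (H := Hc1b 0 v ltac:(lra)). rewrite quad_neg in H. lra. }
  clear Hc1b.
  destruct (unif_negdef n M Tmin Tmax hT HMc Hneg) as [c2 [Hc2 HM]].
  set (CP := mnorm n P + 1).
  assert (HCP : 0 < CP) by (unfold CP; assert (H := mnorm_nonneg n P); lra).
  assert (HV2 : forall v, quad n P v <= CP * ss n v).
  { intros v. assert (H := quad_bound n P v). apply Rabs_le_between in H.
    assert (0 <= ss n v) by apply ss_nonneg. unfold CP. nra. }
  set (rho := Rmax 0 (1 - c2 / CP)).
  assert (Hrho0 : 0 <= rho) by apply Rmax_l.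
  assert (Hrho1 : rho < 1).
  { unfold rho. apply Rmax_lub_lt. lra. assert (0 < c2 / CP) by (apply Rdiv_lt_0_compat; auto). lra. }
  set (L := mnorm n A).
  set (K0 := exp (2 * L * (tseq 0%nat - t0))).
  set (NJ := mnorm n (mmul n (mtr J) J)).
  set (K := exp (2 * L * Tmax) * NJ).
  assert (HK0 : 0 < K0) by apply exp_pos.
  assert (HK : 0 <= K) by (unfold K; apply Rmult_le_pos; [left; apply exp_pos| apply mnorm_nonneg]).
  set (D := K * CP * K0 / c1).
  assert (HD : 0 <= D) by (unfold D; apply Rmult_le_pos; [apply Rmult_le_pos; [apply Rmult_le_pos|]; lra| left; apply Rinv_0_lt_compat; auto]).
  destruct hseq as [Ht0 Hgap].
  assert (Hest : forall x0 x, is_solution n A J t0 tseq x0 x ->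
     (forall s, t0 < s <= tseq 0%nat -> ss n (x s) <= K0 * ss n x0) /\
     (forall k s, tseq k < s <= tseq (S k) -> ss n (x s) <= D * rho ^ k * ss n x0)).
  { intros x0 x [Hx0 [Hr0 [Hd [Hl Hj]]]].
    assert (Hode : forall k s, tseq k < s < tseq (S k) -> forall i, (i < n)%nat ->
        derivable_pt_lim (fun r => x r i) s (mvec n A (x s) i)).
    { intros k s Hs i Hi. apply Hd; auto.
      assert (H := tseq_le Tmin Tmax t0 tseq hT0 (conj Ht0 Hgap) 0 k ltac:(lia)). lra.
      apply (not_imp_between Tmin Tmax t0 tseq hT0 (conj Ht0 Hgap) k); auto. }
    assert (Hode0 : forall s, t0 < s < tseq 0%nat -> forall i, (i < n)%nat ->
        derivable_pt_lim (fun r => x r i) s (mvec n A (x s) i)).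
    { intros s Hs i Hi. apply Hd; auto. lra.
      apply (not_imp_first Tmin Tmax t0 tseq hT0 (conj Ht0 Hgap)); lra. }
    assert (Hleft : forall k i, (i < n)%nat -> left_lim (fun r => x r i) (tseq k) (x (tseq k) i)).
    { intros k i Hi. apply Hl; auto. assert (H := tseq_le Tmin Tmax t0 tseq hT0 (conj Ht0 Hgap) 0 k ltac:(lia)). lra. }
    assert (Hlt : forall k, tseq k < tseq (S k)).
    { intros k. apply (tseq_lt Tmin Tmax t0 tseq hT0 (conj Ht0 Hgap)). lia. }
    assert (Hfirst : forall s, t0 < s <= tseq 0%nat -> ss n (x s) <= K0 * ss n x0).
    { intros s Hs. apply (interval_bound n A x x0 t0 (tseq 0%nat)); auto.
    }
    assert (Hstep : forall k, quad n P (x (tseq (S k))) <= rho * quad n P (x (tseq k))).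
    { intros k. set (T := tseq (S k) - tseq k).
      assert (HT : Tmin <= T <= Tmax) by apply Hgap.
      assert (Heq : forall i, (i < n)%nat -> x (tseq (S k)) i = Ev n A T (mvec n J (x (tseq k))) i).
      { apply (ode_match_end n A x (mvec n J (x (tseq k))) (tseq k) (tseq (S k))); auto.
        all: try (intros s Hs; apply (Hode k s Hs)); try (intros i Hi; apply Hleft; auto). }
      rewrite (quad_ext n P _ _ Heq). unfold Ev. rewrite <- quad_congr.
      assert (Hq := quad_msub n (mmul n (mtr J) (mmul n (mtr (expm n A T))
                          (mmul n P (mmul n (expm n A T) J)))) P (x (tseq k))).
      assert (HMT := HM T (x (tseq k)) HT). unfold M in HMT. rewrite Hq in HMT.
      assert (H1 := HV2 (x (tseq k))). assert (H2 := HV1 (x (tseq k))).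
      assert (H3 := ss_nonneg n (x (tseq k))).
      assert (Hss : quad n P (x (tseq k)) / CP <= ss n (x (tseq k))).
      { unfold Rdiv. apply Rmult_le_reg_r with CP; auto. rewrite Rmult_assoc, Rinv_l by lra. lra. }
      assert (H4 : (1 - c2 / CP) * quad n P (x (tseq k)) <= rho * quad n P (x (tseq k))).
      { apply Rmult_le_compat_r. nra. apply Rmax_r. }
      assert (H5 : c2 * (quad n P (x (tseq k)) / CP) <= c2 * ss n (x (tseq k))) by (apply Rmult_le_compat_l; lra).
      unfold Rdiv in *. nra. }
    assert (HV0 : quad n P (x (tseq 0%nat)) <= CP * (K0 * ss n x0)).
    { eapply Rle_trans. apply HV2. apply Rmult_le_compat_l. lra. apply Hfirst. lra. }
    assert (HVk : forall k, quad n P (x (tseq k)) <= rho ^ k * (CP * (K0 * ss n x0))).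
    { induction k. simpl. lra. eapply Rle_trans. apply Hstep. simpl. rewrite Rmult_assoc.
      apply Rmult_le_compat_l; auto. }
    split; auto.
    intros k s Hs.
    assert (H1 : ss n (x s) <= exp (2 * L * (tseq (S k) - tseq k)) * ss n (mvec n J (x (tseq k)))).
    { apply (interval_bound n A x (mvec n J (x (tseq k))) (tseq k) (tseq (S k))); auto.
      all: try (intros s' Hs'; apply (Hode k s' Hs')); try (intros i Hi; apply Hleft; auto). }
    assert (H2 := ss_mvec n J (x (tseq k))). fold NJ in H2.
    assert (H3 : exp (2 * L * (tseq (S k) - tseq k)) <= exp (2 * L * Tmax)).
    { apply exp_le_mono. assert (0 <= L) by apply mnorm_nonneg. assert (Hg := Hgap k). nra. }
    assert (H4 : ss n (x s) <= K * ss n (x (tseq k))).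
    { eapply Rle_trans. apply H1. unfold K. replace (exp (2 * L * Tmax) * NJ * ss n (x (tseq k))) with (exp (2 * L * Tmax) * (NJ * ss n (x (tseq k)))) by ring. assert (0 <= NJ) by apply mnorm_nonneg.
      assert (0 <= ss n (mvec n J (x (tseq k)))) by apply ss_nonneg. assert (0 < exp (2 * L * (tseq (S k) - tseq k))) by apply exp_pos.
      apply Rmult_le_compat; try lra. }
    assert (H5 : ss n (x (tseq k)) <= rho ^ k * (CP * (K0 * ss n x0)) / c1).
    { apply Rmult_le_reg_r with c1; auto. unfold Rdiv. rewrite Rmult_assoc, Rinv_l by lra. rewrite Rmult_1_r.
      assert (H := HV1 (x (tseq k))). specialize (HVk k). lra. }
    eapply Rle_trans. apply H4. unfold D. 
    replace (K * CP * K0 / c1 * rho ^ k * ss n x0) with (K * (rho ^ k * (CP * (K0 * ss n x0)) / c1)) by (field; lra).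
    apply Rmult_le_compat_l; auto. }
  set (B := K0 + D + 1).
  assert (HB : 1 <= B) by (unfold B; lra).
  assert (Hglob : forall x0 x, is_solution n A J t0 tseq x0 x -> forall s, t0 <= s -> ss n (x s) <= B * ss n x0).
  { intros x0 x Hs s Hts. destruct (Hest x0 x Hs) as [E1 E2]. assert (H0 := ss_nonneg n x0).
    destruct (Req_dec s t0) as [E|E].
    - subst s. destruct Hs as [Hx0 _]. rewrite (ss_ext n (x t0) x0 Hx0). nra.
    - destruct (Rle_or_lt s (tseq 0%nat)).
      + assert (H1 := E1 s ltac:(lra)). unfold B. nra.
      + destruct (locate Tmin Tmax t0 tseq hT0 (conj Ht0 Hgap) s H) as [k Hk].
        assert (H1 := E2 k s Hk). assert (H2 : rho ^ k <= 1) by (clear -Hrho0 Hrho1; induction k; simpl; nra).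
        assert (H3 : 0 <= rho ^ k) by (apply pow_le; lra).
        assert (D * rho ^ k <= D) by nra. unfold B. nra. }
  split.
  - intros eps Heps. exists (eps / B). split. apply Rdiv_lt_0_compat; lra.
    intros x0 x Hs Hn s Hts. rewrite vnorm_ss in *.
    assert (H0 := ss_nonneg n x0).
    assert (Hx0 : ss n x0 < (eps / B) * (eps / B)).
    { rewrite <- (sqrt_sqrt (ss n x0)) by auto. assert (0 <= sqrt (ss n x0)) by apply sqrt_pos. nra. }
    assert (H1 := Hglob x0 x Hs s Hts).
    assert (H2 : ss n (x s) < eps * eps).
    { apply Rle_lt_trans with (B * ss n x0); auto.
      apply Rlt_le_trans with (B * ((eps / B) * (eps / B))). apply Rmult_lt_compat_l; lra.
      replace (B * (eps / B * (eps / B))) with (eps * eps / B) by (field; lra).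
      unfold Rdiv. rewrite <- (Rmult_1_r (eps * eps)) at 2. apply Rmult_le_compat_l. nra.
      rewrite <- Rinv_1. apply Rinv_le_contravar; lra. }
    rewrite <- (sqrt_square eps) by lra. apply sqrt_lt_1_alt. split; auto. apply ss_nonneg.
  - intros x0 x Hs eps Heps.
    destruct (Hest x0 x Hs) as [_ E2].
    set (DD := D * ss n x0 + 1).
    assert (HDD : 0 < DD) by (unfold DD; assert (H := ss_nonneg n x0); nra).
    destruct (pow_lt_1_zero rho ltac:(rewrite Rabs_pos_eq; lra) (eps * eps / DD)) as [N HN].
    { apply Rdiv_lt_0_compat; nra. }
    exists (tseq N + 1). intros s Hsn.
    assert (Hs0 : tseq 0%nat < s) by (assert (H := tseq_le Tmin Tmax t0 tseq hT0 (conj Ht0 Hgap) 0 N ltac:(lia)); lra).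
    destruct (locate Tmin Tmax t0 tseq hT0 (conj Ht0 Hgap) s Hs0) as [k Hk].
    assert (HkN : (N <= k)%nat).
    { destruct (Nat.le_gt_cases N k); auto. assert (H1 := tseq_le Tmin Tmax t0 tseq hT0 (conj Ht0 Hgap) (S k) N ltac:(lia)). lra. }
    assert (H1 := E2 k s Hk). assert (H2 := HN k HkN). rewrite Rabs_pos_eq in H2 by (apply pow_le; lra).
    assert (H3 : ss n (x s) < eps * eps).
    { eapply Rle_lt_trans. apply H1. assert (H0 := ss_nonneg n x0). assert (H4 : 0 <= rho ^ k) by (apply pow_le; lra).
      apply Rle_lt_trans with (DD * rho ^ k). unfold DD. nra.
      apply Rmult_lt_reg_r with (/ DD). apply Rinv_0_lt_compat; auto.
      replace (DD * rho ^ k * / DD) with (rho ^ k) by (field; lra). exact H2. }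
    rewrite vnorm_ss. rewrite <- (sqrt_square eps) by lra. apply sqrt_lt_1_alt. split; auto. apply ss_nonneg.
Qed.
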